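(* Assume agents' preferences over sets of judgments are decisive. Then every judgment aggregation rule that satisfies participation also satisfies antipodal strategyproofness.
   Context: An agenda is a finite nonempty list $\Phi=(\phi_1,\dots,\phi_m)$ of propositional formulas; a judgment is $J\in\{0,1\}^m$, $J(\phi_k)$ its $k$-th entry; the antipodal judgment $\overline{J}$ accepts exactly the issues rejected by $J$. $\mathcal{J}(\Phi)\subseteq\{0,1\}^m$ is the nonempty set of admissible judgments. For a finite set of agents $N$, a profile is $\mathbf{P}=(J_1,\dots,J_n)\in\mathcal{J}(\Phi)^n$; $\mathbf{P}_{-i}$ is $\mathbf{P}$ with agent $i$'s judgment removed and $(\mathbf{P}_{-i},J)$ is $\mathbf{P}_{-i}$ with $J$ added as agent $i$'s judgment. A rule $F$ maps every profile (every finite group of agents, every agenda) to a nonempty $F(\mathbf{P})\subseteq\mathcal{J}(\Phi)$. Hamming distance $H(J,J')=\sum_k|J(\phi_k)-J'(\phi_k)|$. Agent $i$ with truthful judgment $J_i$ has $J\succ_i J'$ iff $H(J_i,J)<H(J_i,J')$. The preference over sets is decisive: for $X,Y\subseteq\mathcal{J}(\Phi)$, $X\mathrel{\mathring{\succ}}_i Y$ iff there exist $J\in X$, $J'\in Y$ with $J\succ_i J'$ and $\{J,J'\}\not\subseteq X\cap Y$. $F$ satisfies participation if there is no profile $\mathbf{P}$ and agent $i$ with $F(\mathbf{P}_{-i})\mathrel{\mathring{\succ}}_i F(\mathbf{P})$. $F$ satisfies antipodal strategyproofness if there is no profile $\mathbf{P}$ and agent $i$ with $F(\mathbf{P}_{-i},\overline{J_i})\mathrel{\mathring{\succ}}_i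 F(\mathbf{P})$. *)

(* Defs.v *)
From mathcomp Require Import all_boot all_order.
From mathcomp Require Import finmap.
Set Implicit Arguments. Unset Strict Implicit. Unset Printing Implicit Defensive.
Local Open Scope fmap_scope.

(* A judgment on an agenda with m issues: a vector in {0,1}^m, encoded as an
   m-tuple of booleans (true = accept). *)
Definition judgment (m : nat) := m.-tuple bool.

Definition hamming (m : nat) (J J' : judgment m) : nat :=
  \sum_(k < m) (tnth J k != tnth J' k).

Definition antipodal (m : nat) (J : judgment m) : judgment m :=
  [tuple negb (tnth J k) | k < m].

Definition jpref (m : nat) (Ji J J' : judgment m) : bool :=
  hamming Ji J < hamming Ji J'.

Definition dec_set_pref (m : nat) (Ji : judgment m) (X Y : {set judgment m}) : Prop :=
  exists J J', [/\ J \in X, J' \in Y, jpref Ji J J' &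
                   ~~ ((J \in X :&: Y) && (J' \in X :&: Y))].

(* A profile for a finite group of agents N (agents are natural numbers):
   a finite map from N to judgments.  P.[~ i] is P_{-i}; P.[i <- J] is
   (P_{-i}, J). *)
Definition profile (m : nat) := {fmap nat -> judgment m}.

Definition admissible_profile (m : nat) (Adm : {set judgment m}) (P : profile m) : Prop :=
  forall k J, P.[? k] = Some J -> J \in Adm.

(* Agendas are drawn from an arbitrary type Ag; agenda a has (num a) issues
   and admissible set adm a. *)
Definition is_rule (Ag : Type) (num : Ag -> nat)
  (adm : forall a, {set judgment (num a)})
  (F : forall a, profile (num a) -> {set judgment (num a)}) : Prop :=
  forall a (P : profile (num a)), admissible_profile (adm a) P ->
    F a P != set0 /\ F a P \subset adm a.

Definition participation (Ag : Type) (num : Ag -> nat)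
  (adm : forall a, {set judgment (num a)})
  (F : forall a, profile (num a) -> {set judgment (num a)}) : Prop :=
  forall a (P : profile (num a)) (i : nat) (Ji : judgment (num a)),
    admissible_profile (adm a) P -> P.[? i] = Some Ji ->
    ~ dec_set_pref Ji (F a P.[~ i]) (F a P).

Definition antipodal_sp (Ag : Type) (num : Ag -> nat)
  (adm : forall a, {set judgment (num a)})
  (F : forall a, profile (num a) -> {set judgment (num a)}) : Prop :=
  forall a (P : profile (num a)) (i : nat) (Ji : judgment (num a)),
    admissible_profile (adm a) P -> P.[? i] = Some Ji ->
    antipodal Ji \in adm a ->
    ~ dec_set_pref Ji (F a P.[i <- antipodal Ji]) (F a P).

(* Main.v *)
Require Import Defs.
From mathcomp Require Import all_boot all_order.
From mathcomp Require Import finmap.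
Local Open Scope fmap_scope.
From mathcomp Require Import zify.
Set Implicit Arguments. Unset Strict Implicit.

Lemma hamming_anti m (J X : judgment m) :
  hamming J X + hamming (antipodal J) X = m.
Proof.
rewrite /hamming -big_split /=.
rewrite (eq_bigr (fun _ => 1)).
  by rewrite sum1_card card_ord.
move=> k _; rewrite /antipodal tnth_map tnth_ord_tuple.
by case: (tnth J k); case: (tnth X k).
Qed.

Lemma jpref_anti m (J X Y : judgment m) :
  jpref (antipodal J) X Y = jpref J Y X.
Proof.
rewrite /jpref.
have h1 := hamming_anti J X; have h2 := hamming_anti J Y.
apply/idP/idP => H; lia.
Qed.

Theorem theorem1 (Ag : Type) (num : Ag -> nat)
  (adm : forall a, {set judgment (num a)})
  (F : forall a, profile (num a) -> {set judgment (num a)}) :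
  (forall a, adm a != set0) ->
  is_rule adm F ->
  participation adm F ->
  antipodal_sp adm F.
Proof.
move=> _ Hrule Hpart a P i Ji HP Hi Hanti [A [B [HA HB HAB Hn]]].
set Q := P.[i <- antipodal Ji] in HA Hn.
have HPr : admissible_profile (adm a) P.[~ i].
  by move=> k J; rewrite fnd_rem1; case: (k != i) => //; apply: HP.
have HQ : admissible_profile (adm a) Q.
  by move=> k J; rewrite /Q fnd_set; case: (k == i) => [[<-]|] //; apply: HP.
have HQi : Q.[? i] = Some (antipodal Ji) by rewrite /Q fnd_set eqxx.
have HQr : Q.[~ i] = P.[~ i] by rewrite /Q remf1_set eqxx.
have P1 := Hpart a P i Ji HP Hi.
have P2 := Hpart a Q i (antipodal Ji) HQ HQi.
rewrite HQr in P2.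
set S := F a P.[~ i] in P1 P2.
have [Sne _] := Hrule a _ HPr.
case/set0Pn: Sne => C HC.
have V1 : forall X Y, X \in S -> Y \in F a P -> jpref Ji X Y ->
    (X \in F a P) && (Y \in S).
  move=> X Y hX hY hXY; apply/negPn/negP => hN; apply: P1.
  exists X, Y; split => //; rewrite !inE hX hY /=.
  by move: hN; case: (X \in F a P); case: (Y \in S).
have V2 : forall X Y, X \in S -> Y \in F a Q -> jpref Ji Y X ->
    (X \in F a Q) && (Y \in S).
  move=> X Y hX hY hXY; apply/negPn/negP => hN; apply: P2.
  exists X, Y; split => //; first by rewrite jpref_anti.
  rewrite !inE hX hY /=.
  by move: hN; case: (X \in F a Q); case: (Y \in S).
move: Hn; rewrite !inE HA HB /=.
have HAB' := HAB; move: HAB'; rewrite /jpref => /ltP hAB.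
case: (ltnP (hamming Ji C) (hamming Ji B)) => hCB.
- have /andP [_ BS] := V1 C B HC HB hCB.
  have /andP [BQ AS] := V2 B A BS HA HAB.
  rewrite BQ andbT => /negP nAP.
  have /andP [AP _] := V1 A B AS HB HAB.
  by rewrite AP in nAP.
- have hAC : jpref Ji A C by rewrite /jpref; move: hCB; lia.
  have /andP [_ AS] := V2 C A HC HA hAC.
  have /andP [AP BS] := V1 A B AS HB HAB.
  rewrite AP /= => /negP nBQ.
  have /andP [BQ _] := V2 B A BS HA HAB.
  by rewrite BQ in nBQ.
Qed.
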